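(* For a finite graph $G=(V,E)$ and $z>0$, $$\sup_{\mathbf{x}\in FM(G)}\Phi^B(\mathbf{x};z)=\Phi^B(\mathbf{x}(z);z),$$ where $\mathbf{x}(z)$ is defined from the LABP limits as below.
   Context: $\vec E$: directed edges; $\partial u$: neighbours of $u$ (and, in $\sum_{e\in\partial v}$, the edges incident to $v$); empty sums are $0$. LABP: $m^0_{\vec e}(z)=0$, $m^{t+1}_{u\to v}(z)=z/(1+\sum_{w\in\partial u\setminus v}m^t_{w\to u}(z))$; $Y_{\vec e}(z)=\lim_t m^t_{\vec e}(z)$ (exists); $x_e(z)=Y_{\vec e}(z)Y_{-\vec e}(z)/(z+Y_{\vec e}(z)Y_{-\vec e}(z))$. $FM(G)=\{\mathbf{x}\in\mathbb{R}^E:x_e\ge0,\ \sum_{e\in\partial v}x_e\le1\}$. $\Phi^B(\mathbf{x};z)=(\ln z)\sum_{e\in E}x_e+S^B(\mathbf{x})$ with $S^B(\mathbf{x})=\frac12\sum_{v}\{\sum_{e\in\partial v}(-x_e\ln x_e+(1-x_e)\ln(1-x_e))-2(1-\sum_{e\in\partial v}x_e)\ln(1-\sum_{e\in\partial v}x_e)\}$, $0\ln0=0$. *)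

(* Defs.v *)
From Stdlib Require Import Reals List Arith.
Import ListNotations.
Open Scope R_scope.

(* A finite simple graph on vertex set V = {0,...,n-1}, given by a
   symmetric irreflexive boolean adjacency relation. *)
Definition simple_graph (n : nat) (adj : nat -> nat -> bool) : Prop :=
  (forall u v, adj u v = adj v u) /\ (forall u, adj u u = false).

Definition lsum {A : Type} (f : A -> R) (l : list A) : R :=
  fold_right (fun a s => f a + s) 0 l.

Definition nbrs (n : nat) (adj : nat -> nat -> bool) (u : nat) : list nat :=
  filter (fun w => adj u w) (seq 0 n).

Definition edges (n : nat) (adj : nat -> nat -> bool) : list (nat * nat) :=
  flat_map (fun u => map (fun v => (u, v))
                        (filter (fun v => andb (Nat.ltb u v) (adj u v)) (seq 0 n)))
           (seq 0 n).

(* A vector x in R^E is a function x : nat -> nat -> R, whose value on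
   the edge {u,v} is x (min u v) (max u v). *)
Definition xe (x : nat -> nat -> R) (u v : nat) : R :=
  x (Nat.min u v) (Nat.max u v).

Definition FM (n : nat) (adj : nat -> nat -> bool) (x : nat -> nat -> R) : Prop :=
  (forall e, In e (edges n adj) -> 0 <= x (fst e) (snd e)) /\
  (forall v, (v < n)%nat -> lsum (fun w => xe x v w) (nbrs n adj v) <= 1).

Definition xlnx (t : R) : R := if Rle_dec t 0 then 0 else t * ln t.

Definition SB (n : nat) (adj : nat -> nat -> bool) (x : nat -> nat -> R) : R :=
  / 2 * lsum (fun v =>
      lsum (fun w => - xlnx (xe x v w) + xlnx (1 - xe x v w)) (nbrs n adj v)
      - 2 * xlnx (1 - lsum (fun w => xe x v w) (nbrs n adj v)))
    (seq 0 n).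

Definition PhiB (n : nat) (adj : nat -> nat -> bool) (x : nat -> nat -> R) (z : R) : R :=
  ln z * lsum (fun e => x (fst e) (snd e)) (edges n adj) + SB n adj x.

(* LABP messages: labp z t u v = m^t_{u->v}(z). *)
Fixpoint labp (n : nat) (adj : nat -> nat -> bool) (z : R) (t : nat) (u v : nat) : R :=
  match t with
  | O => 0
  | S t' => z / (1 + lsum (fun w => labp n adj z t' w u)
                          (filter (fun w => negb (Nat.eqb w v)) (nbrs n adj u)))
  end.

Definition xz_of (Y : nat -> nat -> R) (z : R) (u v : nat) : R :=
  Y u v * Y v u / (z + Y u v * Y v u).

(* Main.v *)
Require Import Defs.
From Stdlib Require Import Reals List Arith Lra Lia Psatz Classical.
From Coquelicot Require Import Coquelicot.
Import ListNotations.
Open Scope R_scope.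

Lemma lsum_nil {A} (f : A -> R) : lsum f [] = 0.
Proof. reflexivity. Qed.
Lemma lsum_cons {A} (f : A -> R) a l : lsum f (a :: l) = f a + lsum f l.
Proof. reflexivity. Qed.
Lemma lsum_app {A} (f : A -> R) l1 l2 : lsum f (l1 ++ l2) = lsum f l1 + lsum f l2.
Proof. induction l1. rewrite app_nil_l, lsum_nil; lra.
 rewrite <- app_comm_cons, !lsum_cons, IHl1; lra. Qed.
Lemma lsum_ext {A} (f g : A -> R) l : (forall x, In x l -> f x = g x) -> lsum f l = lsum g l.
Proof. induction l; intros H; [reflexivity|]. rewrite !lsum_cons, H, IHl; auto.
 intros; apply H; simpl; auto. simpl; auto. Qed.
Lemma lsum_plus {A} (f g : A -> R) l : lsum (fun x => f x + g x) l = lsum f l + lsum g l.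
Proof. induction l; [unfold lsum; simpl; lra|]. rewrite !lsum_cons, IHl; lra. Qed.
Lemma lsum_minus {A} (f g : A -> R) l : lsum (fun x => f x - g x) l = lsum f l - lsum g l.
Proof. induction l; [unfold lsum; simpl; lra|]. rewrite !lsum_cons, IHl; lra. Qed.
Lemma lsum_scal {A} (f : A -> R) c l : lsum (fun x => c * f x) l = c * lsum f l.
Proof. induction l; [unfold lsum; simpl; lra|]. rewrite !lsum_cons, IHl; lra. Qed.
Lemma lsum_scalr {A} (f : A -> R) c l : lsum (fun x => f x * c) l = lsum f l * c.
Proof. induction l; [unfold lsum; simpl; lra|]. rewrite !lsum_cons, IHl; lra. Qed.
Lemma lsum_zero {A} (l : list A) : lsum (fun _ => 0) l = 0.
Proof. induction l; [reflexivity|]. rewrite lsum_cons, IHl; lra. Qed.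
Lemma lsum_le {A} (f g : A -> R) l : (forall x, In x l -> f x <= g x) -> lsum f l <= lsum g l.
Proof. induction l; intros H; [unfold lsum; simpl; lra|]. rewrite !lsum_cons.
 assert (f a <= g a) by (apply H; simpl; auto).
 assert (lsum f l <= lsum g l) by (apply IHl; intros; apply H; simpl; auto). lra. Qed.
Lemma lsum_nonneg {A} (f : A -> R) l : (forall x, In x l -> 0 <= f x) -> 0 <= lsum f l.
Proof. intros H. rewrite <- (lsum_zero l). apply lsum_le. auto. Qed.
Lemma lsum_elem {A} (f : A -> R) l w : (forall x, In x l -> 0 <= f x) -> In w l -> f w <= lsum f l.
Proof. induction l; intros H Hw; [destruct Hw|]. rewrite lsum_cons. destruct Hw as [<-|Hw].
 - assert (0 <= lsum f l) by (apply lsum_nonneg; intros; apply H; simpl; auto). lra.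
 - assert (0 <= f a) by (apply H; simpl; auto).
   assert (f w <= lsum f l) by (apply IHl; auto; intros; apply H; simpl; auto). lra. Qed.

Definition gf (x : R) := x * (1 - x) / (1 - 2 * x).

Lemma gf_super a b : 0 < a -> 0 < b -> a + b < /2 -> gf a + gf b <= gf (a + b).
Proof. intros Ha Hb Hab. unfold gf.
 set (al := 1 - 2*a). set (be := 1 - 2*b).
 assert (Hal: 0 < al < 1) by (unfold al; lra). assert (Hbe: 0 < be < 1) by (unfold be; lra).
 assert (Hs: 0 < al + be - 1) by (unfold al, be; lra).
 replace (a * (1 - a) / al) with (/4 * (/al + 2*a - 1)) by (unfold al; field; lra).
 replace (b * (1 - b) / be) with (/4 * (/be + 2*b - 1)) by (unfold be; field; lra).
 replace ((a+b) * (1 - (a+b)) / (1 - 2 * (a+b))) with (/4 * (/(al+be-1) + 2*(a+b) - 1)) by (unfold al, be; field; lra).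
 assert (/al + /be <= /(al+be-1) + 1).
 { assert (H: (/ (al + be - 1) + 1) - (/al + /be) = (al+be)*(1-al)*(1-be) / (al*be*(al+be-1))) by (field; lra).
   assert (0 <= (al+be)*(1-al)*(1-be) / (al*be*(al+be-1))).
   { apply Rmult_le_pos. apply Rmult_le_pos; [apply Rmult_le_pos|]; lra.
     left; apply Rinv_0_lt_compat. apply Rmult_lt_0_compat; [apply Rmult_lt_0_compat|]; lra. }
   lra. }
 lra. Qed.

Lemma gf_base r : 0 < r < /2 -> r / 2 <= gf r.
Proof. intros H. unfold gf.
 assert (E: r * (1 - r) / (1 - 2 * r) - r/2 = (r/2) / (1 - 2*r)) by (field; lra).
 assert (0 < (r/2) / (1 - 2*r)) by (apply Rdiv_lt_0_compat; lra). lra. Qed.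

Lemma gsum (l : list nat) (y : nat -> R) r : 0 < r -> (forall w, In w l -> 0 < y w) ->
  r + lsum y l < /2 -> r / 2 + lsum (fun w => gf (y w)) l <= gf (r + lsum y l).
Proof. revert r. induction l as [|a l IH]; intros r Hr Hy Hs.
 - rewrite !lsum_nil in *. rewrite !Rplus_0_r in *. apply gf_base; lra.
 - rewrite !lsum_cons in *.
   assert (Ha: 0 < y a) by (apply Hy; simpl; auto).
   assert (Hl: 0 <= lsum y l) by (apply lsum_nonneg; intros; left; apply Hy; simpl; auto).
   assert (IH' := IH r Hr (fun w Hw => Hy w (or_intror Hw)) ltac:(lra)).
   assert (gf (y a) + gf (r + lsum y l) <= gf (y a + (r + lsum y l))) by (apply gf_super; lra).
   replace (r + (y a + lsum y l)) with (y a + (r + lsum y l)) by ring. lra. Qed.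

Lemma cs2 A B u v : 0 < B -> 0 < v -> (A + u)^2 / (B + v) <= A^2 / B + u^2 / v.
Proof. intros HB Hv.
 assert (H: A^2/B + u^2/v - (A+u)^2/(B+v) = (A*v - u*B)^2 / (B*v*(B+v))) by (field; lra).
 assert (0 <= (A*v - u*B)^2 / (B*v*(B+v))).
 { apply Rmult_le_pos. apply pow2_ge_0. left; apply Rinv_0_lt_compat.
   apply Rmult_lt_0_compat; [apply Rmult_lt_0_compat|]; lra. }
 lra. Qed.

Lemma titu (l : list nat) (u v : nat -> R) A B : 0 < B -> (forall w, In w l -> 0 < v w) ->
  (A + lsum u l)^2 <= (B + lsum v l) * (A^2 / B + lsum (fun w => u w ^2 / v w) l).
Proof. revert A B. induction l as [|a l IH]; intros A B HB Hv.
 - rewrite !lsum_nil, !Rplus_0_r. right; field; lra.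
 - rewrite !lsum_cons.
   assert (Ha: 0 < v a) by (apply Hv; simpl; auto).
   assert (Hl: 0 <= lsum v l) by (apply lsum_nonneg; intros; left; apply Hv; simpl; auto).
   assert (IH' := IH (A + u a) (B + v a) ltac:(lra) (fun w Hw => Hv w (or_intror Hw))).
   assert (C := cs2 A B (u a) (v a) HB Ha).
   replace (A + (u a + lsum u l)) with (A + u a + lsum u l) by ring.
   replace (B + (v a + lsum v l)) with (B + v a + lsum v l) by ring.
   eapply Rle_trans; [exact IH'|]. apply Rmult_le_compat_l; lra. Qed.


Lemma hess (l : list nat) (y h : nat -> R) : (forall w, In w l -> 0 < y w) -> lsum y l < 1 ->
  lsum (fun w => h w ^2 * (/(1 - y w) - / y w)) l <= 2 * (lsum h l)^2 / (1 - lsum y l).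
Proof. intros Hy Hs.
 assert (Hr: 0 <= 2 * (lsum h l)^2 / (1 - lsum y l)).
 { apply Rmult_le_pos. assert (0 <= (lsum h l)^2) by apply pow2_ge_0. lra.
   left; apply Rinv_0_lt_compat; lra. }
 destruct (classic (exists w0, In w0 l /\ /2 < y w0)) as [[w0 [Hw0 Hy0]]|Hno].
 - destruct (in_split _ _ Hw0) as [l1 [l2 ->]].
   set (L' := l1 ++ l2).
   assert (HyL: forall w, In w L' -> 0 < y w).
   { intros w Hw. apply Hy. unfold L' in Hw. apply in_app_or in Hw. apply in_or_app. simpl. tauto. }
   assert (Esplit: forall f : nat -> R, lsum f (l1 ++ w0 :: l2) = f w0 + lsum f L').
   { intros f. unfold L'. rewrite !lsum_app, lsum_cons. ring. }
   rewrite !Esplit in *.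
   assert (HY': 0 <= lsum y L') by (apply lsum_nonneg; intros; left; auto).
   set (r := 1 - (y w0 + lsum y L')).
   assert (Hrpos : 0 < r) by (unfold r; lra).
   assert (Hsmall: forall w, In w L' -> y w < /2).
   { intros w Hw. assert (y w <= lsum y L') by (apply lsum_elem; auto; intros; left; auto). lra. }
   assert (Hgpos: forall w, In w L' -> 0 < gf (y w)).
   { intros w Hw. unfold gf. assert (0 < y w) by auto. assert (y w < /2) by auto.
     apply Rdiv_lt_0_compat; nra. }
   assert (Eterm: lsum (fun w => h w ^2 * (/(1 - y w) - / y w)) L' = - lsum (fun w => h w ^2 / gf (y w)) L').
   { replace (- lsum (fun w => h w ^2 / gf (y w)) L') with (-1 * lsum (fun w => h w ^2 / gf (y w)) L') by ring.
     rewrite <- lsum_scal.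
     apply lsum_ext. intros w Hw. assert (0 < y w) by auto. assert (y w < /2) by auto.
     unfold gf. field. repeat split; lra. }
   rewrite Eterm.
   set (G := gf (1 - y w0)).
   assert (HG: 0 < G) by (unfold G, gf; apply Rdiv_lt_0_compat; nra).
   assert (E0: /(1 - y w0) - / y w0 = / G) by (unfold G, gf; field; repeat split; lra).
   rewrite E0.
   assert (Hgs := gsum L' y r Hrpos HyL ltac:(unfold r; lra)).
   replace (r + lsum y L') with (1 - y w0) in Hgs by (unfold r; ring). fold G in Hgs.
   set (H := h w0 + lsum h L').
   assert (Ht := titu L' (fun w => -1 * h w) (fun w => gf (y w)) H (r/2) ltac:(lra) Hgpos).
   rewrite lsum_scal in Ht.
   replace (H + -1 * lsum h L') with (h w0) in Ht by (unfold H; ring).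
   rewrite (lsum_ext (fun w => (-1 * h w)^2 / gf (y w)) (fun w => h w ^2 / gf (y w))) in Ht
     by (intros; cbv beta; unfold Rdiv; ring).
   set (X := lsum (fun w => h w ^2 / gf (y w)) L') in *.
   assert (HX: 0 <= X).
   { apply lsum_nonneg. intros w Hw. apply Rmult_le_pos. apply pow2_ge_0.
     left; apply Rinv_0_lt_compat; auto. }
   assert (HH: 0 <= H^2 / (r/2)) by (apply Rmult_le_pos; [apply pow2_ge_0|left; apply Rinv_0_lt_compat; lra]).
   assert (h w0 ^2 <= G * (H^2/(r/2) + X)).
   { eapply Rle_trans; [exact Ht|]. apply Rmult_le_compat_r; lra. }
   assert (h w0 ^2 * / G <= H^2/(r/2) + X).
   { apply (Rmult_le_reg_l G); auto. rewrite <- Rmult_assoc, (Rmult_comm G), Rmult_assoc, Rinv_r by lra. lra. }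
   replace (2 * H^2 / r) with (H^2/(r/2)) by (field; lra).
   lra.
 - assert (lsum (fun w => h w ^2 * (/(1 - y w) - / y w)) l <= lsum (fun _ => 0) l).
   { apply lsum_le. intros w Hw. assert (0 < y w) by auto.
     assert (y w <= /2) by (apply Rnot_lt_le; intro; apply Hno; eauto).
     assert (/(1 - y w) <= / y w) by (apply Rinv_le_contravar; lra).
     assert (0 <= h w ^2) by apply pow2_ge_0. nra. }
   rewrite lsum_zero in H. lra.
Qed.

Lemma xlnx_pos u : 0 < u -> xlnx u = u * ln u.
Proof. intros H. unfold xlnx. destruct (Rle_dec u 0); [lra|reflexivity]. Qed.
Lemma xlnx_nonpos u : u <= 0 -> xlnx u = 0.
Proof. intros H. unfold xlnx. destruct (Rle_dec u 0); [reflexivity|lra]. Qed.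

Lemma ln_le_sub1 x : 0 < x -> ln x <= x - 1.
Proof. intros H. pose proof (exp_ineq1_le (ln x)). rewrite exp_ln in H0 by auto. lra. Qed.

Lemma tlnt_bound u : 0 < u < 1 -> Rabs (u * ln u) <= 2 * sqrt u.
Proof. intros Hu.
 assert (Hs: 0 < sqrt u) by (apply sqrt_lt_R0; lra).
 assert (Hsq: sqrt u * sqrt u = u) by (apply sqrt_sqrt; lra).
 assert (Hlnu: ln u < 0) by (rewrite <- ln_1; apply ln_increasing; lra).
 assert (Hln: ln u = - 2 * ln (/ sqrt u)).
 { rewrite ln_Rinv by auto. rewrite <- Hsq at 1. rewrite ln_mult by auto. ring. }
 assert (H1: ln (/ sqrt u) <= / sqrt u - 1) by (apply ln_le_sub1; apply Rinv_0_lt_compat; auto).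
 rewrite Rabs_left by nra. rewrite Hln.
 assert (E: u * / sqrt u = sqrt u) by (rewrite <- Hsq at 1; field; lra).
 assert (u * ln (/ sqrt u) <= u * (/ sqrt u - 1)) by (apply Rmult_le_compat_l; lra).
 nra. Qed.

Lemma xlnx_cont0 : continuity_pt xlnx 0.
Proof. unfold continuity_pt, continue_in, limit1_in, limit_in. intros eps He.
 exists (Rmin 1 ((eps/2)*(eps/2))). split.
 { apply Rmin_pos; nra. }
 intros u [_ Hu]. simpl in *. unfold R_dist in *. rewrite (xlnx_nonpos 0) by lra.
 rewrite Rminus_0_r in *.
 destruct (Rle_dec u 0) as [Hn|Hp].
 - rewrite xlnx_nonpos by auto. rewrite Rabs_R0; lra.
 - assert (Hu1: u < 1). { assert (Rabs u < 1) by (eapply Rlt_le_trans; [exact Hu|apply Rmin_l]).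
     rewrite Rabs_right in H by lra. lra. }
   assert (Hu2: u < (eps/2)*(eps/2)). { assert (Rabs u < (eps/2)*(eps/2)) by (eapply Rlt_le_trans; [exact Hu|apply Rmin_r]).
     rewrite Rabs_right in H by lra. lra. }
   rewrite xlnx_pos by lra.
   eapply Rle_lt_trans. apply tlnt_bound; lra.
   assert (sqrt u < sqrt ((eps/2)*(eps/2))) by (apply sqrt_lt_1; lra).
   rewrite sqrt_square in H by lra. lra.
Qed.

Lemma xlnx_cont u : continuity_pt xlnx u.
Proof.
 destruct (Rtotal_order u 0) as [Hn|[->|Hp]].
 - apply continuity_pt_filterlim.
   apply (continuous_ext_loc xlnx (fun _ => 0)).
   + exists (mkposreal (-u) ltac:(lra)). intros y Hy. simpl.
     change (Rabs (y - u) < - u) in Hy.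
     rewrite xlnx_nonpos; auto. apply Rabs_def2 in Hy. lra.
   + replace (xlnx u) with 0 by (rewrite xlnx_nonpos; lra). apply continuous_const.
 - apply xlnx_cont0.
 - apply continuity_pt_filterlim.
   apply (continuous_ext_loc xlnx (fun y => y * ln y)).
   + exists (mkposreal u Hp). intros y Hy. simpl.
     change (Rabs (y - u) < u) in Hy.
     rewrite xlnx_pos; auto. apply Rabs_def2 in Hy. lra.
   + replace (xlnx u) with (u * ln u) by (rewrite xlnx_pos; lra).
     apply (ex_derive_continuous (fun y => y * ln y)). auto_derive. lra.
Qed.

Definition yt (a p : nat -> R) (t : R) (w : nat) := a w + t * (p w - a w).
Definition Hs (l : list nat) (a p : nat -> R) := lsum (fun w => p w - a w) l.
Definition St l a p t := lsum a l + t * Hs l a p.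
Definition Gx l (mu a p : nat -> R) t := lsum (fun w => mu w * yt a p t w - /2 * xlnx (yt a p t w) + /2 * xlnx (1 - yt a p t w)) l - xlnx (1 - lsum (yt a p t) l).
Definition Gs l (mu a p : nat -> R) t := lsum (fun w => mu w * yt a p t w - /2 * (yt a p t w * ln (yt a p t w)) + /2 * ((1 - yt a p t w) * ln (1 - yt a p t w))) l - (1 - St l a p t) * ln (1 - St l a p t).
Definition G1 l (mu a p : nat -> R) t := lsum (fun w => mu w * (p w - a w) - /2 * ((p w - a w) * (ln (yt a p t w) + 1)) - /2 * ((p w - a w) * (ln (1 - yt a p t w) + 1))) l + Hs l a p * (ln (1 - St l a p t) + 1).
Definition G2 l (a p : nat -> R) t := lsum (fun w => - /2 * ((p w - a w)^2 / yt a p t w) + /2 * ((p w - a w)^2 / (1 - yt a p t w))) l - (Hs l a p)^2 / (1 - St l a p t).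

Lemma is_derive_lsum (l : list nat) (F : nat -> R -> R) (F' : nat -> R) t :
  (forall w, In w l -> is_derive (F w) t (F' w)) ->
  is_derive (fun s => lsum (fun w => F w s) l) t (lsum F' l).
Proof. induction l as [|a l IH]; intros H.
 - rewrite lsum_nil. unfold lsum; simpl. apply (is_derive_const 0 t).
 - rewrite lsum_cons. apply (is_derive_plus (F a) (fun s => lsum (fun w => F w s) l)).
   apply H; simpl; auto. apply IH; intros; apply H; simpl; auto.
Qed.

Lemma lsum_yt l a p t : lsum (yt a p t) l = St l a p t.
Proof. unfold yt, St, Hs. rewrite lsum_plus, lsum_scal. reflexivity. Qed.

Lemma continuous_lsum (l : list nat) (F : nat -> R -> R) t :
  (forall w, In w l -> continuous (F w) t) ->
  continuous (fun s => lsum (fun w => F w s) l) t.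
Proof. induction l as [|a l IH]; intros H.
 - apply (continuous_const 0 t).
 - apply (continuous_plus (F a) (fun s => lsum (fun w => F w s) l)).
   apply H; simpl; auto. apply IH; intros; apply H; simpl; auto.
Qed.

Lemma xlnx_continuous u : continuous xlnx u.
Proof. apply continuity_pt_filterlim, xlnx_cont. Qed.

Lemma xlnx_comp_cont (f : R -> R) t : continuous f t -> continuous (fun s => xlnx (f s)) t.
Proof. intros H. apply (continuous_comp f xlnx); auto. apply xlnx_continuous. Qed.

Lemma Gx_cont l mu a p t : continuity_pt (Gx l mu a p) t.
Proof. apply continuity_pt_filterlim. unfold Gx.
 assert (Hy: forall w, continuous (fun s => yt a p s w) t).
 { intros w. apply (ex_derive_continuous (fun s => yt a p s w)). unfold yt. auto_derive. auto. }
 apply (continuous_minus (fun s => lsum _ l) (fun s => xlnx (1 - lsum (yt a p s) l))).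
 - apply (continuous_lsum l (fun w s => mu w * yt a p s w - /2 * xlnx (yt a p s w) + /2 * xlnx (1 - yt a p s w))).
   intros w Hw.
   apply (continuous_plus (fun s => mu w * yt a p s w - /2 * xlnx (yt a p s w)) (fun s => /2 * xlnx (1 - yt a p s w))).
   + apply (continuous_minus (fun s => mu w * yt a p s w) (fun s => /2 * xlnx (yt a p s w))).
     * apply (continuous_mult (fun _ => mu w) (fun s => yt a p s w)). apply continuous_const. auto.
     * apply (continuous_mult (fun _ => /2) (fun s => xlnx (yt a p s w))). apply continuous_const.
       apply xlnx_comp_cont; auto.
   + apply (continuous_mult (fun _ => /2) (fun s => xlnx (1 - yt a p s w))). apply continuous_const.
     apply xlnx_comp_cont. apply (continuous_minus (fun _ => 1) (fun s => yt a p s w)). apply continuous_const. auto.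
 - apply xlnx_comp_cont. apply (continuous_minus (fun _ => 1) (fun s => lsum (yt a p s) l)). apply continuous_const.
   apply (continuous_lsum l (fun w s => yt a p s w)). auto.
Qed.

Section V.
Variables (l : list nat) (mu a p : nat -> R).
Hypothesis Hp : forall w, In w l -> 0 <= p w.
Hypothesis Ha : forall w, In w l -> 0 < a w.
Hypothesis Hsp : lsum p l <= 1.
Hypothesis Hsa : lsum a l < 1.

Lemma pos_t t : 0 <= t < 1 ->
  (forall w, In w l -> 0 < yt a p t w /\ 0 < 1 - yt a p t w) /\ 0 < 1 - St l a p t.
Proof. intros Ht.
 assert (HS: 0 < 1 - St l a p t).
 { unfold St, Hs. rewrite lsum_minus. nra. }
 assert (Hy: forall w, In w l -> 0 < yt a p t w).
 { intros w Hw. unfold yt. assert (0 < a w) by auto. assert (0 <= p w) by auto. nra. }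
 split; auto. intros w Hw. split; auto.
 assert (yt a p t w <= lsum (yt a p t) l) by (apply lsum_elem; auto; intros; left; auto).
 rewrite lsum_yt in H. lra.
Qed.

Lemma Gs_deriv t : 0 <= t < 1 -> is_derive (Gs l mu a p) t (G1 l mu a p t).
Proof. intros Ht. destruct (pos_t t Ht) as [Hy HS].
 unfold Gs, G1.
 apply (is_derive_plus (fun s => lsum _ l) (fun s => - ((1 - St l a p s) * ln (1 - St l a p s)))).
 - apply (is_derive_lsum l (fun w s => mu w * yt a p s w - /2 * (yt a p s w * ln (yt a p s w)) + /2 * ((1 - yt a p s w) * ln (1 - yt a p s w)))).
   intros w Hw. destruct (Hy w Hw) as [H1 H2]. unfold yt in *.
   auto_derive. split; [lra|split;[lra|auto]].
   replace (1 + - (a w + t * (p w - a w))) with (1 - (a w + t * (p w - a w))) by ring.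
   field. split; lra.
 - unfold St in *. auto_derive. lra.
   replace (1 + - (lsum a l + t * Hs l a p)) with (1 - (lsum a l + t * Hs l a p)) by ring.
   field. lra.
Qed.

Lemma G1_deriv t : 0 <= t < 1 -> is_derive (G1 l mu a p) t (G2 l a p t).
Proof. intros Ht. destruct (pos_t t Ht) as [Hy HS].
 unfold G1, G2.
 apply (is_derive_plus (fun s => lsum _ l) (fun s => Hs l a p * (ln (1 - St l a p s) + 1))).
 - apply (is_derive_lsum l (fun w s => mu w * (p w - a w) - /2 * ((p w - a w) * (ln (yt a p s w) + 1)) - /2 * ((p w - a w) * (ln (1 - yt a p s w) + 1)))).
   intros w Hw. destruct (Hy w Hw) as [H1 H2]. unfold yt in *.
   auto_derive. split; [lra|split;[lra|auto]].
   replace (1 + - (a w + t * (p w - a w))) with (1 - (a w + t * (p w - a w))) by ring.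
   field. split; lra.
 - unfold St in *. auto_derive. lra.
   replace (1 + - (lsum a l + t * Hs l a p)) with (1 - (lsum a l + t * Hs l a p)) by ring.
   field. lra.
Qed.

Hypothesis Hmu : forall w, In w l -> mu w = /2 * ln (a w * (1 - a w)) - ln (1 - lsum a l).

Lemma G1_0 : G1 l mu a p 0 = 0.
Proof. destruct (pos_t 0 ltac:(lra)) as [Hy HS].
 unfold G1.
 rewrite (lsum_ext _ (fun w => (p w - a w) * (- ln (1 - lsum a l) - 1))).
 - rewrite lsum_scalr. unfold St. fold (Hs l a p). rewrite Rmult_0_l, Rplus_0_r. ring.
 - intros w Hw. destruct (Hy w Hw) as [H1 H2]. unfold yt in *.
   rewrite Rmult_0_l, Rplus_0_r in *. rewrite Hmu by auto.
   rewrite ln_mult by lra. field.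
Qed.

Lemma G2_nonpos t : 0 <= t < 1 -> G2 l a p t <= 0.
Proof. intros Ht. destruct (pos_t t Ht) as [Hy HS].
 assert (Hh := hess l (yt a p t) (fun w => p w - a w) (fun w Hw => proj1 (Hy w Hw))
   ltac:(rewrite lsum_yt; lra)).
 rewrite lsum_yt in Hh. fold (Hs l a p) in Hh.
 unfold G2.
 rewrite (lsum_ext _ (fun w => /2 * ((p w - a w) ^2 * (/(1 - yt a p t w) - / yt a p t w)))).
 - rewrite lsum_scal.
   replace ((Hs l a p)^2 / (1 - St l a p t)) with (/2 * (2 * Hs l a p ^ 2 / (1 - St l a p t))) by (field; lra).
   lra.
 - intros w Hw. destruct (Hy w Hw) as [H1 H2]. field. lra.
Qed.

Lemma Gx_Gs t : 0 <= t < 1 -> Gx l mu a p t = Gs l mu a p t.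
Proof. intros Ht. destruct (pos_t t Ht) as [Hy HS]. unfold Gx, Gs.
 rewrite lsum_yt. rewrite (xlnx_pos (1 - St l a p t)) by auto. f_equal.
 apply lsum_ext. intros w Hw. destruct (Hy w Hw). rewrite !xlnx_pos by auto. reflexivity.
Qed.

Lemma deriv_cont (f : R -> R) x d : is_derive f x d -> continuity_pt f x.
Proof. intros H. apply continuity_pt_filterlim. apply (ex_derive_continuous f). exists d; auto. Qed.

Lemma G1_nonpos t : 0 <= t < 1 -> G1 l mu a p t <= 0.
Proof. intros Ht. destruct (Req_dec t 0) as [->|Hn]. rewrite G1_0; lra.
 destruct (MVT_gen (G1 l mu a p) 0 t (G2 l a p)) as [c [Hc E]].
 - rewrite Rmin_left, Rmax_right by lra. intros x Hx. apply G1_deriv; lra.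
 - rewrite Rmin_left, Rmax_right by lra. intros x Hx. eapply deriv_cont. apply G1_deriv; lra.
 - rewrite Rmin_left, Rmax_right in Hc by lra. rewrite G1_0 in E.
   assert (G2 l a p c <= 0) by (apply G2_nonpos; lra). nra.
Qed.

Lemma Gx_dec : Gx l mu a p 1 <= Gx l mu a p 0.
Proof.
 destruct (MVT_gen (Gx l mu a p) 0 1 (fun c => if Rlt_dec c 1 then G1 l mu a p c else 0)) as [c [Hc E]].
 - rewrite Rmin_left, Rmax_right by lra. intros x Hx.
   destruct (Rlt_dec x 1) as [_|]; [|lra].
   apply (is_derive_ext_loc (Gs l mu a p)).
   + assert (He: 0 < Rmin x (1 - x)) by (apply Rmin_pos; lra).
     exists (mkposreal _ He). intros y Hy. change (Rabs (y - x) < Rmin x (1 - x)) in Hy.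
     apply Rabs_def2 in Hy. pose proof (Rmin_l x (1-x)). pose proof (Rmin_r x (1-x)).
     symmetry; apply Gx_Gs; lra.
   + apply Gs_deriv; lra.
 - intros x _. apply Gx_cont.
 - rewrite Rmin_left, Rmax_right in Hc by lra.
   destruct (Rlt_dec c 1).
   + assert (G1 l mu a p c <= 0) by (apply G1_nonpos; lra). nra.
   + lra.
Qed.

Lemma vertex_ineq :
  lsum (fun w => mu w * p w - /2 * xlnx (p w) + /2 * xlnx (1 - p w)) l - xlnx (1 - lsum p l) <=
  lsum (fun w => mu w * a w - /2 * xlnx (a w) + /2 * xlnx (1 - a w)) l - xlnx (1 - lsum a l).
Proof. pose proof Gx_dec as H. unfold Gx in H.
 assert (E1: forall w, yt a p 1 w = p w) by (intros; unfold yt; ring).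
 assert (E0: forall w, yt a p 0 w = a w) by (intros; unfold yt; ring).
 rewrite (lsum_ext (yt a p 1) p) in H by auto.
 rewrite (lsum_ext (yt a p 0) a) in H by auto.
 rewrite (lsum_ext (fun w => mu w * yt a p 1 w - _ + _) (fun w => mu w * p w - /2 * xlnx (p w) + /2 * xlnx (1 - p w))) in H
   by (intros; rewrite E1; reflexivity).
 rewrite (lsum_ext (fun w => mu w * yt a p 0 w - _ + _) (fun w => mu w * a w - /2 * xlnx (a w) + /2 * xlnx (1 - a w))) in H
   by (intros; rewrite E0; reflexivity).
 exact H.
Qed.
End V.

Lemma lsum_filter {A} (f : A -> R) (P : A -> bool) l :
  lsum f (filter P l) = lsum (fun x => if P x then f x else 0) l.
Proof. induction l as [|a l IH]; [reflexivity|]. cbn [filter]. rewrite (lsum_cons (fun x => if P x then f x else 0)). destruct (P a).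
 - rewrite !lsum_cons, IH. reflexivity.
 - rewrite IH. ring. Qed.

Lemma lsum_map {A B} (f : B -> R) (g : A -> B) l : lsum f (map g l) = lsum (fun x => f (g x)) l.
Proof. induction l as [|a l IH]; [reflexivity|]. cbn [map]. rewrite !lsum_cons, IH. reflexivity. Qed.

Lemma lsum_flat_map {A B} (f : B -> R) (g : A -> list B) l :
  lsum f (flat_map g l) = lsum (fun x => lsum f (g x)) l.
Proof. induction l as [|a l IH]; [reflexivity|]. cbn [flat_map]. rewrite lsum_app, lsum_cons, IH. reflexivity. Qed.

Lemma lsum_swap {A B} (f : A -> B -> R) l1 l2 :
  lsum (fun i => lsum (fun j => f i j) l2) l1 = lsum (fun j => lsum (fun i => f i j) l1) l2.
Proof. induction l1 as [|a l IH].
 - rewrite lsum_nil. symmetry. apply lsum_zero.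
 - rewrite lsum_cons, IH, <- lsum_plus. apply lsum_ext. intros. rewrite lsum_cons. reflexivity. Qed.

Lemma lsum_remove (f : nat -> R) l w : NoDup l -> In w l ->
  lsum f (filter (fun x => negb (Nat.eqb x w)) l) = lsum f l - f w.
Proof. induction l as [|a l IH]; intros Hnd Hw; [destruct Hw|].
 inversion Hnd as [|? ? Hna Hnd']; subst. cbn [filter].
 destruct (Nat.eqb_spec a w) as [->|Hne]; cbn [negb].
 - rewrite lsum_cons. rewrite (filter_ext_in _ (fun _ => true)).
   + rewrite List.filter_true. ring.
   + intros x Hx. destruct (Nat.eqb_spec x w); [subst; contradiction|reflexivity].
 - rewrite !lsum_cons. destruct Hw as [->|Hw]; [congruence|]. rewrite IH by auto. ring.
Qed.

Section G.
Variables (n : nat) (adj : nat -> nat -> bool).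
Hypothesis Hg : simple_graph n adj.

Lemma in_nbrs v w : In w (nbrs n adj v) <-> (w < n)%nat /\ adj v w = true.
Proof. unfold nbrs. rewrite filter_In, in_seq. split; intros [H1 H2]; split; auto; lia. Qed.

Lemma nbrs_nodup v : NoDup (nbrs n adj v).
Proof. unfold nbrs. apply NoDup_filter, seq_NoDup. Qed.

Lemma sym_sum (F : nat -> nat -> R) :
  lsum (fun v => lsum (fun w => F v w) (nbrs n adj v)) (seq 0 n) =
  lsum (fun v => lsum (fun w => F w v) (nbrs n adj v)) (seq 0 n).
Proof. unfold nbrs.
 rewrite (lsum_ext _ (fun v => lsum (fun w => if adj v w then F v w else 0) (seq 0 n)))
  by (intros; apply lsum_filter).
 rewrite (lsum_ext (fun v => lsum (fun w => F w v) _) (fun v => lsum (fun w => if adj v w then F w v else 0) (seq 0 n)))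
  by (intros; apply lsum_filter).
 rewrite lsum_swap. apply lsum_ext. intros v _. apply lsum_ext. intros w _.
 destruct Hg as [Hs _]. rewrite Hs. reflexivity.
Qed.

Lemma xe_sym x v w : xe x v w = xe x w v.
Proof. unfold xe. rewrite Nat.min_comm, Nat.max_comm. reflexivity. Qed.

Lemma edges_sum (x : nat -> nat -> R) :
  lsum (fun e => x (fst e) (snd e)) (edges n adj) =
  /2 * lsum (fun v => lsum (fun w => xe x v w) (nbrs n adj v)) (seq 0 n).
Proof. unfold edges. rewrite lsum_flat_map.
 rewrite (lsum_ext _ (fun u => lsum (fun v => if andb (Nat.ltb u v) (adj u v) then x u v else 0) (seq 0 n))).
 2:{ intros u _. rewrite lsum_map, lsum_filter. reflexivity. }
 unfold nbrs.
 rewrite (lsum_ext (fun v => lsum _ (filter _ _)) (fun v => lsum (fun w => (if andb (Nat.ltb v w) (adj v w) then x v w else 0) + (if andb (Nat.ltb w v) (adj w v) then x w v else 0)) (seq 0 n))).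
 2:{ intros v _. rewrite lsum_filter. apply lsum_ext. intros w _.
     destruct Hg as [Hs Hi]. unfold xe. rewrite (Hs w v).
     destruct (adj v w) eqn:E; simpl.
     - destruct (Nat.ltb_spec v w); destruct (Nat.ltb_spec w v); simpl; try lia.
       + rewrite Nat.min_l, Nat.max_r by lia. ring.
       + rewrite Nat.min_r, Nat.max_l by lia. ring.
       + assert (v = w) by lia. subst. rewrite Hi in E. discriminate.
     - rewrite !Bool.andb_false_r. ring. }
 rewrite (lsum_ext (fun v => lsum (fun w => _ + _) _) (fun v => lsum (fun w => if andb (Nat.ltb v w) (adj v w) then x v w else 0) (seq 0 n) + lsum (fun w => if andb (Nat.ltb w v) (adj w v) then x w v else 0) (seq 0 n)))
  by (intros; apply lsum_plus).
 rewrite lsum_plus.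
 rewrite (lsum_swap (fun v w => if andb (Nat.ltb w v) (adj w v) then x w v else 0)).
 field.
Qed.
End G.

Lemma cv_nonneg (u : nat -> R) l : Un_cv u l -> (forall k, 0 <= u k) -> 0 <= l.
Proof. intros Hc Hu. destruct (Rle_dec 0 l) as [|Hl]; auto.
 destruct (Hc (- l) ltac:(lra)) as [N HN]. specialize (HN N (le_n _)).
 unfold R_dist in HN. apply Rabs_def2 in HN. specialize (Hu N). lra. Qed.

Lemma cv_shift (u : nat -> R) l : Un_cv u l -> Un_cv (fun k => u (S k)) l.
Proof. intros H eps He. destruct (H eps He) as [N HN]. exists N. intros k Hk. apply HN. lia. Qed.

Lemma cv_lsum (l : list nat) (F : nat -> nat -> R) (L : nat -> R) :
  (forall w, In w l -> Un_cv (fun k => F w k) (L w)) ->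
  Un_cv (fun k => lsum (fun w => F w k) l) (lsum L l).
Proof. induction l as [|a l IH]; intros H.
 - rewrite lsum_nil. intros eps He. exists O. intros. unfold R_dist. rewrite lsum_nil.
   rewrite Rminus_0_r, Rabs_R0. lra.
 - rewrite lsum_cons. apply (CV_plus (fun k => F a k) (fun k => lsum (fun w => F w k) l)).
   apply H; simpl; auto. apply IH; intros; apply H; simpl; auto.
Qed.

Section FP.
Variables (n : nat) (adj : nat -> nat -> bool) (z : R) (Y : nat -> nat -> R).
Hypothesis Hg : simple_graph n adj.
Hypothesis Hz : 0 < z.
Hypothesis HY : forall u v, (u < n)%nat -> (v < n)%nat -> adj u v = true ->
     Un_cv (fun t => labp n adj z t u v) (Y u v).

Lemma labp_nonneg t : forall u v, 0 <= labp n adj z t u v.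
Proof. induction t as [|t IH]; intros u v; simpl. lra.
 apply Rlt_le. apply Rdiv_lt_0_compat; auto.
 assert (0 <= lsum (fun w => labp n adj z t w u) (filter (fun w => negb (w =? v)%nat) (nbrs n adj u)))
   by (apply lsum_nonneg; auto). lra.
Qed.

Lemma Y_nonneg u v : (u < n)%nat -> (v < n)%nat -> adj u v = true -> 0 <= Y u v.
Proof. intros. eapply cv_nonneg. apply HY; auto. intros; apply labp_nonneg. Qed.

Lemma Y_fix u v : (u < n)%nat -> (v < n)%nat -> adj u v = true ->
  Y u v = z / (1 + lsum (fun w => Y w u) (filter (fun w => negb (w =? v)%nat) (nbrs n adj u))).
Proof. intros Hu Hv Ha.
 set (F := filter (fun w => negb (w =? v)%nat) (nbrs n adj u)).
 assert (HF: forall w, In w F -> (w < n)%nat /\ adj w u = true).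
 { intros w Hw. unfold F in Hw. apply filter_In in Hw. destruct Hw as [Hw _].
   apply (in_nbrs n adj) in Hw. destruct Hw. destruct Hg as [Hs _]. rewrite Hs. auto. }
 assert (Hnn: 0 <= lsum (fun w => Y w u) F).
 { apply lsum_nonneg. intros w Hw. destruct (HF w Hw). apply Y_nonneg; auto. }
 assert (Hc: Un_cv (fun k => lsum (fun w => labp n adj z k w u) F) (lsum (fun w => Y w u) F)).
 { apply (cv_lsum F (fun w k => labp n adj z k w u)). intros w Hw. destruct (HF w Hw). apply HY; auto. }
 assert (Hcont: continuity_pt (fun s => z / (1 + s)) (lsum (fun w => Y w u) F)).
 { apply derivable_continuous_pt. apply derivable_pt_div. apply derivable_pt_const.
   apply derivable_pt_plus. apply derivable_pt_const. apply derivable_pt_id. lra. }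
 assert (H1 := continuity_seq _ _ _ Hcont Hc).
 assert (H2 := cv_shift _ _ (HY u v Hu Hv Ha)).
 apply (UL_sequence _ _ _ H2 H1).
Qed.

Lemma Y_pos u v : (u < n)%nat -> (v < n)%nat -> adj u v = true -> 0 < Y u v.
Proof. intros Hu Hv Ha. rewrite Y_fix by auto. apply Rdiv_lt_0_compat; auto.
 assert (0 <= lsum (fun w => Y w u) (filter (fun w => negb (w =? v)%nat) (nbrs n adj u))).
 { apply lsum_nonneg. intros w Hw. apply filter_In in Hw. destruct Hw as [Hw _].
   apply (in_nbrs n adj) in Hw. destruct Hw. destruct Hg as [Hs _]. apply Y_nonneg; auto. rewrite Hs; auto. }
 lra.
Qed.
End FP.

Lemma xe_symf (f : nat -> nat -> R) v w : (forall u v, f u v = f v u) -> xe f v w = f v w.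
Proof. intros H. unfold xe. destruct (Nat.le_ge_cases v w).
 - rewrite Nat.min_l, Nat.max_r by lia. reflexivity.
 - rewrite Nat.min_r, Nat.max_l by lia. apply H. Qed.

Section M.
Variables (n : nat) (adj : nat -> nat -> bool) (z : R) (Y : nat -> nat -> R).
Hypothesis Hg : simple_graph n adj.
Hypothesis Hz : 0 < z.
Hypothesis HY : forall u v, (u < n)%nat -> (v < n)%nat -> adj u v = true ->
     Un_cv (fun t => labp n adj z t u v) (Y u v).

Let N v := nbrs n adj v.
Let a := xz_of Y z.
Let D v := 1 + lsum (fun w => Y w v) (N v).

Lemma nb v w : In w (N v) -> (w < n)%nat /\ adj v w = true /\ adj w v = true.
Proof. intros H. apply (in_nbrs n adj) in H. destruct H. destruct Hg as [Hs _]. rewrite (Hs w v). repeat split; auto. Qed.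

Lemma nb_sym v w : (v < n)%nat -> In w (N v) -> In v (N w).
Proof. intros Hv H. destruct (nb v w H) as [? [? ?]]. apply (in_nbrs n adj). auto. Qed.

Lemma D_ge1 v : (v < n)%nat -> 1 <= D v.
Proof. intros Hv. unfold D. assert (0 <= lsum (fun w => Y w v) (N v)); [|lra].
 apply lsum_nonneg. intros w Hw. destruct (nb v w Hw) as [? [? ?]]. apply (Y_nonneg n adj z Y); auto. Qed.

Lemma F2 v w : (v < n)%nat -> In w (N v) -> Y v w * D v = z + Y v w * Y w v.
Proof. intros Hv Hw. destruct (nb v w Hw) as [Hwn [H1 H2]].
 pose proof (Y_fix n adj z Y Hg Hz HY v w Hv Hwn H1) as E.
 rewrite (lsum_remove _ _ _ (nbrs_nodup n adj v) Hw) in E. fold (N v) in E.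
 assert (0 < Y w v) by (apply (Y_pos n adj z Y); auto).
 assert (1 <= D v) by (apply D_ge1; auto).
 assert (ED: 1 + (lsum (fun w0 => Y w0 v) (N v) - Y w v) = D v - Y w v) by (unfold D; ring).
 assert (Y w v <= lsum (fun w0 => Y w0 v) (N v)).
 { apply (lsum_elem (fun w0 => Y w0 v)); auto. intros u Hu. destruct (nb v u Hu) as [? [? ?]].
   apply (Y_nonneg n adj z Y); auto. }
 rewrite ED in E. rewrite E. field. unfold D. lra.
Qed.

Lemma xe_a v w : xe a v w = a v w.
Proof. apply xe_symf. intros. unfold a, xz_of. rewrite (Rmult_comm (Y v0 u)). reflexivity. Qed.

Lemma F3 v w : (v < n)%nat -> In w (N v) -> xe a v w = Y w v / D v.
Proof. intros Hv Hw. rewrite xe_a. unfold a, xz_of. rewrite <- F2 by auto.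
 destruct (nb v w Hw) as [Hwn [H1 H2]].
 assert (0 < Y v w) by (apply (Y_pos n adj z Y); auto).
 assert (1 <= D v) by (apply D_ge1; auto). field. lra. Qed.

Lemma F4 v : (v < n)%nat -> lsum (fun w => xe a v w) (N v) = (D v - 1) / D v.
Proof. intros Hv. rewrite (lsum_ext _ (fun w => Y w v * / D v)).
 - rewrite lsum_scalr. assert (1 <= D v) by (apply D_ge1; auto).
   replace (D v - 1) with (lsum (fun w => Y w v) (N v)) by (unfold D; ring). field. lra.
 - intros w Hw. rewrite F3 by auto. reflexivity. Qed.

Definition mu v w := /2 * ln (xe a v w * (1 - xe a v w)) - ln (1 - lsum (fun u => xe a v u) (N v)).

Lemma mu_anti v w : (v < n)%nat -> In w (N v) -> mu v w + mu w v = ln z.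
Proof. intros Hv Hw. destruct (nb v w Hw) as [Hwn [H1 H2]].
 assert (Hv' : In v (N w)) by (apply nb_sym; auto).
 assert (P: 0 < Y v w) by (apply (Y_pos n adj z Y); auto).
 assert (Q: 0 < Y w v) by (apply (Y_pos n adj z Y); auto).
 assert (Dv := D_ge1 v Hv). assert (Dw := D_ge1 w Hwn).
 pose proof (F2 v w Hv Hw) as E1. pose proof (F2 w v Hwn Hv') as E2.
 unfold mu. rewrite (xe_sym a w v). rewrite !F4 by auto.
 rewrite (F3 v w Hv Hw).
 replace (1 - (D v - 1) / D v) with (/ D v) by (field; lra).
 replace (1 - (D w - 1) / D w) with (/ D w) by (field; lra).
 rewrite !ln_Rinv by lra.
 set (A := Y w v / D v).
 assert (HA: 0 < A < 1).
 { unfold A. split. apply Rdiv_lt_0_compat; lra.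
   assert (Y w v < D v); [|apply (Rmult_lt_reg_r (D v)); [lra|]; unfold Rdiv; rewrite Rmult_assoc, Rinv_l by lra; lra].
   assert (Y v w * Y w v < Y v w * D v) by lra. nra. }
 assert (Ez: A * (1 - A) * D v * D w = z).
 { replace (A * (1 - A) * D v * D w) with ((Y w v * D w) * (Y v w * D v - Y v w * Y w v) / (Y v w * D v))
     by (unfold A; field; lra).
   rewrite E1, E2. field. nra. }
 rewrite <- Ez. rewrite !ln_mult by nra. field.
Qed.

Definition V v (x : nat -> nat -> R) := lsum (fun w => mu v w * xe x v w - /2 * xlnx (xe x v w) + /2 * xlnx (1 - xe x v w)) (N v) - xlnx (1 - lsum (fun w => xe x v w) (N v)).

Lemma T1zero x : lsum (fun v => lsum (fun w => (mu v w - /2 * ln z) * xe x v w) (N v)) (seq 0 n) = 0.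
Proof. unfold N.
 set (S := lsum (fun v => lsum (fun w => (mu v w - /2 * ln z) * xe x v w) (N v)) (seq 0 n)).
 assert (E: S = -1 * S).
 { unfold S at 1. unfold N. rewrite (sym_sum n adj Hg (fun v w => (mu v w - /2 * ln z) * xe x v w)).
   unfold S. rewrite <- lsum_scal. apply lsum_ext. intros v Hv. apply in_seq in Hv.
   rewrite <- lsum_scal. apply lsum_ext. intros w Hw. fold (N v) in Hw.
   pose proof (mu_anti v w ltac:(lia) Hw). rewrite (xe_sym x w v).
   replace (mu w v) with (ln z - mu v w) by lra. field. }
 assert (HS0: S = 0) by lra. exact HS0.
Qed.

Lemma Phi_decomp x : PhiB n adj x z = lsum (fun v => V v x) (seq 0 n).
Proof.
 unfold PhiB, SB. rewrite (edges_sum n adj Hg).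
 rewrite (lsum_ext (fun v => V v x) (fun v => (lsum (fun w => (mu v w - /2 * ln z) * xe x v w) (N v)
     + /2 * ln z * lsum (fun w => xe x v w) (N v)) +
     /2 * (lsum (fun w => - xlnx (xe x v w) + xlnx (1 - xe x v w)) (N v) - 2 * xlnx (1 - lsum (fun w => xe x v w) (N v))))).
 - rewrite lsum_plus, lsum_plus, T1zero, !lsum_scal. unfold N. ring.
 - intros v _. unfold V. rewrite <- lsum_scal, <- lsum_plus.
   rewrite (lsum_ext (fun w => - xlnx (xe x v w) + xlnx (1 - xe x v w)) (fun w => 2 * (- /2 * xlnx (xe x v w) + /2 * xlnx (1 - xe x v w))))
     by (intros; field).
   rewrite lsum_scal.
   replace (lsum (fun w => mu v w * xe x v w - / 2 * xlnx (xe x v w) + / 2 * xlnx (1 - xe x v w)) (N v))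
    with (lsum (fun w => (mu v w - / 2 * ln z) * xe x v w + / 2 * ln z * xe x v w) (N v) +
          lsum (fun w => - / 2 * xlnx (xe x v w) + / 2 * xlnx (1 - xe x v w)) (N v)).
   + field.
   + rewrite <- lsum_plus. apply lsum_ext. intros; field.
Qed.

Lemma edges_prop e : In e (edges n adj) -> (fst e < n)%nat /\ (snd e < n)%nat /\ adj (fst e) (snd e) = true.
Proof. unfold edges. intros H. apply in_flat_map in H. destruct H as [u [Hu H]].
 apply in_map_iff in H. destruct H as [v [<- Hv]]. apply filter_In in Hv. destruct Hv as [Hv Hb].
 apply Bool.andb_true_iff in Hb. destruct Hb. apply in_seq in Hu. apply in_seq in Hv. simpl. repeat split; auto; lia.
Qed.

Lemma in_edges v w : (v < n)%nat -> In w (N v) -> In (Nat.min v w, Nat.max v w) (edges n adj).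
Proof. intros Hv Hw. destruct (nb v w Hw) as [Hwn [H1 H2]].
 assert (Hne: v <> w). { intros ->. destruct Hg as [_ Hi]. rewrite Hi in H1. discriminate. }
 unfold edges. apply in_flat_map. exists (Nat.min v w). split.
 - apply in_seq. lia.
 - apply in_map_iff. exists (Nat.max v w). split; auto. apply filter_In. split.
   + apply in_seq. lia.
   + apply Bool.andb_true_iff. split. apply Nat.ltb_lt. lia.
     destruct (Nat.le_ge_cases v w).
     * rewrite Nat.min_l, Nat.max_r by lia. auto.
     * rewrite Nat.min_r, Nat.max_l by lia. auto.
Qed.

Lemma FM_a : FM n adj a.
Proof. split.
 - intros e He. destruct (edges_prop e He) as [H1 [H2 H3]].
   destruct Hg as [Hs _].
   assert (0 < Y (fst e) (snd e)) by (apply (Y_pos n adj z Y); auto).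
   assert (0 < Y (snd e) (fst e)) by (apply (Y_pos n adj z Y); auto; rewrite Hs; auto).
   unfold a, xz_of. left. apply Rdiv_lt_0_compat; nra.
 - intros v Hv. fold (N v). rewrite F4 by auto. assert (1 <= D v) by (apply D_ge1; auto).
   apply (Rmult_le_reg_r (D v)). lra. unfold Rdiv. rewrite Rmult_assoc, Rinv_l by lra. lra.
Qed.

Lemma V_le x v : FM n adj x -> (v < n)%nat -> V v x <= V v a.
Proof. intros [Hx1 Hx2] Hv. unfold V.
 apply (vertex_ineq (N v) (mu v) (fun w => xe a v w) (fun w => xe x v w)).
 - intros w Hw. unfold xe. apply (Hx1 (Nat.min v w, Nat.max v w)). apply in_edges; auto.
 - intros w Hw. rewrite F3 by auto. destruct (nb v w Hw) as [? [? ?]].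
   apply Rdiv_lt_0_compat. apply (Y_pos n adj z Y); auto. pose proof (D_ge1 v Hv); lra.
 - apply Hx2; auto.
 - rewrite F4 by auto. assert (1 <= D v) by (apply D_ge1; auto).
   apply (Rmult_lt_reg_r (D v)). lra. unfold Rdiv. rewrite Rmult_assoc, Rinv_l by lra. lra.
 - intros. reflexivity.
Qed.

Theorem main_thm : is_lub (fun r => exists x, FM n adj x /\ r = PhiB n adj x z) (PhiB n adj (xz_of Y z) z).
Proof. split.
 - intros r [x [Hx ->]]. fold a. rewrite !Phi_decomp. apply lsum_le. intros v Hv.
   apply in_seq in Hv. apply V_le; auto. lia.
 - intros b Hb. apply Hb. exists a. split; [apply FM_a|reflexivity].
Qed.
End M.


Theorem proposition5 (n : nat) (adj : nat -> nat -> bool) (z : R)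
  (Y : nat -> nat -> R) :
  simple_graph n adj ->
  0 < z ->
  (forall u v, (u < n)%nat -> (v < n)%nat -> adj u v = true ->
     Un_cv (fun t => labp n adj z t u v) (Y u v)) ->
  is_lub (fun r => exists x, FM n adj x /\ r = PhiB n adj x z)
         (PhiB n adj (xz_of Y z) z).
Proof. intros Hg Hz HY. exact (main_thm n adj z Y Hg Hz HY). Qed.
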